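(* Let $H\leq F_2$ and fix $y\in F_2$. For any $xH\in F_2/H$ and all $i\geq 1$, we have $|E_i(xH)|=|\Omega_{i,xH}|$.
   Context: $F_2$ is the free group on $a,b$ and $\Xi=\{a,b,a^{-1},b^{-1}\}$. The directed coset graph of $F_2/H$ has vertex set $F_2/H$ and, for each vertex $rH$ and each $h\in\Xi$, one directed edge from $rH$ to $hrH$ (so loops and parallel edges may occur); two vertices are adjacent if there is an edge between them. Sets $\Omega_{k,xH}\subseteq\Xi$ for $k\geq -1$, $xH\in F_2/H$ are defined recursively: $\Omega_{-1,xH}=\varnothing$ for all $xH$; $\Omega_{0,yH}=\Xi$ and $\Omega_{0,xH}=\varnothing$ for $xH\neq yH$; and for $k\geq 0$, $\Omega_{k+1,zH}=\{h\in\Xi:\Omega_{k-1,zH}=\varnothing\text{ and }\Omega_{k,h^{-1}zH}\neq\varnothing\}$. Sets $E_i$ of directed edges are defined recursively: $E_1$ is the set of all directed edges whose source is $yH$; $E_{i+1}$ is the set of all directed edges $tH\to sH$ such that no directed edge from $sH$ to $tH$ belongs to $E_i$ and there exists a vertex $rH$ with a directed edge $rH\to tH$ in $E_i$. $E_i(xH)$ denotes the set of edges in $E_i$ whose target is $xH$. *)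

(* Defs.v *)
From mathcomp Require Import all_boot.
Set Implicit Arguments. Unset Strict Implicit. Unset Printing Implicit Defensive.

(* Letters Xi = {a, b, a^-1, b^-1}, encoded as (is_b, is_inverse):
   a = (false,false), b = (true,false), a^-1 = (false,true), b^-1 = (true,true). *)
Definition Xi : finType := (bool * bool)%type.
Definition linv (x : Xi) : Xi := (x.1, ~~ x.2).

Definition reduced (w : seq Xi) : bool := sorted (fun x y => y != linv x) w.
Definition F2 : eqType := {w : seq Xi | reduced w}.

Definition lmul (x : Xi) (w : seq Xi) : seq Xi :=
  if w is y :: w' then (if y == linv x then w' else x :: w) else [:: x].

Lemma lmul_reduced x w : reduced w -> reduced (lmul x w).
Proof.
case: w => [|y w] //= Hw.
case: ifP => Hy; first exact: (path_sorted Hw).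
by rewrite /= Hy Hw.
Qed.

Definition f2one : F2 := exist _ [::] isT.
Definition lmulF (x : Xi) (g : F2) : F2 :=
  exist _ (lmul x (proj1_sig g)) (lmul_reduced x (proj2_sig g)).
Definition f2mul (g h : F2) : F2 := foldr lmulF h (proj1_sig g).
Definition f2inv (g : F2) : F2 := foldr lmulF f2one (rev (map linv (proj1_sig g))).

Definition is_subgroup (H : pred F2) : Prop :=
  [/\ H f2one, (forall g h, H g -> H h -> H (f2mul g h)) & (forall g, H g -> H (f2inv g))].

(* equality of left cosets: rH = sH  iff  r^-1 s \in H *)
Definition cosEq (H : pred F2) (r s : F2) : bool := H (f2mul (f2inv r) s).

(* Omega sets.  OmPair H y n = (Omega_{n-1,.}, Omega_{n,.}), cosets given by representatives. *)
Fixpoint OmPair (H : pred F2) (y : F2) (n : nat)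
  : (F2 -> {set Xi}) * (F2 -> {set Xi}) :=
  match n with
  | 0 => (fun _ => set0, fun z => if cosEq H z y then [set: Xi] else set0)
  | n'.+1 =>
      let: (p, c) := OmPair H y n' in
      (c, fun z => [set h : Xi | (p z == set0) && (c (lmulF (linv h) z) != set0)])
  end.

(* Omega H y k x  =  Omega_{k, xH}  (k >= 0; Omega_{-1} is empty) *)
Definition Omega (H : pred F2) (y : F2) (k : nat) (x : F2) : {set Xi} :=
  (OmPair H y k).2 x.

(* Directed edges of the coset graph: the edge (r, h) goes from rH to h r H.
   Ef H y i r h  <=>  the edge (rH, h) belongs to E_{i+1}. *)
Fixpoint Ef (H : pred F2) (y : F2) (i : nat) (t : F2) (h : Xi) : bool :=
  match i with
  | 0 => cosEq H t y
  | i'.+1 =>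
      let s := lmulF h t in
      (* no edge from sH to tH lies in E_i *)
      ~~ [exists h' : Xi, cosEq H (lmulF h' s) t && Ef H y i' s h']
      (* some edge rH -> tH lies in E_i ; such edges are (h'^-1 t H, h') *)
      && [exists h' : Xi, Ef H y i' (lmulF (linv h') t) h']
  end.

(* E_i(xH), i >= 1: the edges of E_i with target xH.  An edge with target xH is
   determined by its label h (its source is then h^-1 xH), so we record the labels. *)
Definition E_in (H : pred F2) (y : F2) (i : nat) (x : F2) : {set Xi} :=
  [set h : Xi | Ef H y i.-1 (lmulF (linv h) x) h].

(* Main.v *)
Require Import Defs.
From mathcomp Require Import all_boot.

Lemma linvK (x : Xi) : linv (linv x) = x.
Proof. by case: x => a b; rewrite /linv /= negbK. Qed.

Lemma F2_eq (w1 w2 : seq Xi) (p1 : reduced w1) (p2 : reduced w2) :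
  w1 = w2 -> (exist _ w1 p1 : F2) = exist _ w2 p2.
Proof. move=> E; subst w2; by rewrite (eq_irrelevance p1 p2). Qed.

Lemma lmulK x w : reduced w -> lmul (linv x) (lmul x w) = w.
Proof.
case: w => [|z w] /=; first by rewrite linvK eqxx.
move=> Hw; case: ifP => [/eqP Ez|Hz].
  subst z; case: w Hw => [|u w] //= /andP [Hu _].
  by rewrite (negbTE Hu).
by rewrite /= linvK eqxx.
Qed.

Lemma lmulFK x g : lmulF (linv x) (lmulF x g) = g.
Proof. case: g => w Hw; rewrite /lmulF /=; apply: F2_eq; exact: lmulK. Qed.

Lemma lmulFKV x g : lmulF x (lmulF (linv x) g) = g.
Proof. by rewrite -{1}(linvK x) lmulFK. Qed.

Definition act (s : seq Xi) (g : F2) : F2 := foldr lmulF g s.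

Lemma act_lmul x v g : reduced v -> act (lmul x v) g = lmulF x (act v g).
Proof.
case: v => [|z v] //= Hv; case: ifP => // /eqP ->.
by rewrite lmulFKV.
Qed.

Lemma act_val r g : act (proj1_sig (act r f2one)) g = act r g.
Proof.
elim: r => [|x r IH] //=.
by rewrite (@act_lmul x _ g (proj2_sig (act r f2one))) IH.
Qed.

Lemma act_one w (Hw : reduced w) : act w f2one = exist _ w Hw.
Proof.
elim: w Hw => [|x w IH] Hw /=; first exact: F2_eq.
have Hw' : reduced w by exact: (path_sorted Hw).
rewrite (IH Hw') /lmulF /=; apply: F2_eq.
case: w Hw Hw' {IH} => [|u w] //= /andP [Hu _] _.
by rewrite (negbTE Hu).
Qed.

Lemma act_inv w g : act (rev (map linv w)) (act w g) = g.
Proof.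
elim: w g => [|x w IH] g //=.
by rewrite rev_cons /act foldr_rcons lmulFK; exact: IH.
Qed.

Lemma invK t : f2mul (f2inv t) t = f2one.
Proof.
rewrite /f2mul /f2inv -/(act _ t).
have -> : foldr lmulF f2one (rev (map linv (proj1_sig t))) =
          act (rev (map linv (proj1_sig t))) f2one by [].
rewrite act_val.
case: t => w Hw /=; by rewrite -(@act_one w Hw) act_inv.
Qed.

Section Main.
Variables (H : pred F2) (y : F2).

Definition P n := (OmPair H y n).1.

Lemma OmS n z : Omega H y n.+1 z =
  [set h : Xi | (P n z == set0) && (Omega H y n (lmulF (linv h) z) != set0)].
Proof. by rewrite /Omega /P /=; case: (OmPair H y n). Qed.

Lemma PS n : P n.+1 = Omega H y n.
Proof. by rewrite /Omega /P /=; case: (OmPair H y n). Qed.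

Lemma P0 z : P 0 z = set0.
Proof. by []. Qed.

Lemma Om0 z : (Omega H y 0 z != set0) = cosEq H z y.
Proof.
rewrite /Omega /=; case: (cosEq H z y); last by rewrite eqxx.
by apply/set0Pn; exists (true, true); rewrite inE.
Qed.

Lemma OmSn n z : (Omega H y n.+1 z != set0) =
  (P n z == set0) && [exists h, Omega H y n (lmulF (linv h) z) != set0].
Proof.
rewrite OmS; apply/set0Pn/andP.
  by case=> h; rewrite inE => /andP [A B]; split => //; apply/existsP; exists h.
by case=> A /existsP [h B]; exists h; rewrite inE A B.
Qed.

Hypothesis H1 : H f2one.

Lemma cosEq_refl t : cosEq H t t.
Proof. by rewrite /cosEq invK. Qed.

Lemma Ef_char i t h :
  Ef H y i t h = (Omega H y i t != set0) && (P i (lmulF h t) == set0).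
Proof.
elim: i t h => [|i IH] t h /=; first by rewrite Om0 P0 eqxx andbT.
have B : [exists h', Ef H y i (lmulF (linv h') t) h'] = (Omega H y i.+1 t != set0).
  rewrite OmSn; apply/existsP/andP.
    case=> h'; rewrite IH lmulFKV => /andP [A C]; split => //.
    by apply/existsP; exists h'.
  by case=> A /existsP [h' C]; exists h'; rewrite IH lmulFKV A C.
rewrite B PS.
case Nt: (Omega H y i.+1 t != set0); rewrite ?andbF // andbT.
move: Nt; rewrite OmSn => /andP [Pt _].
rewrite -[_ == set0]negbK.
case Ns: (Omega H y i (lmulF h t) != set0) => /=.
  apply: negbF; apply/existsP; exists (linv h).
  by rewrite IH lmulFK cosEq_refl Ns Pt.
apply/negP => /existsP [h' /andP [_]]; rewrite IH Ns.
by [].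
Qed.

End Main.

Theorem lemma4p1 (H : pred F2) (HH : is_subgroup H) (y x : F2) (i : nat) :
  1 <= i -> #|E_in H y i x| = #|Omega H y i x|.
Proof.
case: i => [|j] // _.
case: HH => H1 _ _.
apply: eq_card => h.
rewrite /E_in OmS !inE /= Ef_char // lmulFKV andbC.
by [].
Qed.
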